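(* Let $0\neq h\in\mathbb{F}[x]$ and regard $A_h\subseteq A_1$ via $x\mapsto x$, $\hat y\mapsto yh$. Then the following are equivalent: (1) $h\in\mathbb{F}^*$; (2) $A_1$ is a Noetherian right $A_h$-module; (3) $A_1$ is a free right $A_h$-module. The same equivalence holds with ''right'' replaced by ''left'' in (2) and (3).
   Context: $\mathbb{F}$ is an arbitrary field. For $h\in\mathbb{F}[x]$, $A_h$ is the unital associative $\mathbb{F}$-algebra generated by $x,\hat y$ with defining relation $\hat yx-x\hat y=h$. $A_1$ is the Weyl algebra, generated by $x,y$ with $yx-xy=1$; for $h\neq 0$, $x\mapsto x,\ \hat y\mapsto yh$ embeds $A_h$ into $A_1$ as a subalgebra. *)

(* Defs.v *)
From HB Require Import structures.
From mathcomp Require Import all_boot all_order all_algebra.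
Set Implicit Arguments. Unset Strict Implicit. Unset Printing Implicit Defensive.
Import GRing.Theory.
Local Open Scope ring_scope.

(* The Weyl algebra A_1 over a field F, in normal form:
   an element a : {poly {poly F}} represents  sum_j (a`_j)(x) * y^j,
   with polynomial-in-x coefficients written on the LEFT of powers of y.
   Addition is that of {poly {poly F}}. *)
Notation weyl F := {poly {poly F}}.

Definition wx (F : fieldType) : weyl F := ('X : {poly F})%:P.
Definition wy (F : fieldType) : weyl F := 'X.
Definition wpol (F : fieldType) (p : {poly F}) : weyl F := p%:P.

(* Product of A_1 determined by y x - x y = 1, i.e. in normal form
   (p y^j)(q y^k) = sum_{i<=j} C(j,i) p q^{(i)} y^(j-i+k). *)
Definition wmul (F : fieldType) (a b : weyl F) : weyl F :=
  \sum_(j < size a) \sum_(k < size b) \sum_(i < j.+1)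
    ((a`_j * (b`_k)^`(i) *+ 'C(j, i)) *: 'X^(j - i + k)).

Inductive in_Ah (F : fieldType) (h : {poly F}) : weyl F -> Prop :=
  | Ah_scalar (c : F) : in_Ah h (wpol c%:P)
  | Ah_x : in_Ah h (wx F)
  | Ah_yh : in_Ah h (wmul (wy F) (wpol h))
  | Ah_add a b : in_Ah h a -> in_Ah h b -> in_Ah h (a + b)
  | Ah_mul a b : in_Ah h a -> in_Ah h b -> in_Ah h (wmul a b).

Definition right_submod (F : fieldType) (h : {poly F}) (N : weyl F -> Prop) :=
  [/\ N 0, (forall a b, N a -> N b -> N (a + b))
    & (forall a r, N a -> in_Ah h r -> N (wmul a r))].
Definition left_submod (F : fieldType) (h : {poly F}) (N : weyl F -> Prop) :=
  [/\ N 0, (forall a b, N a -> N b -> N (a + b))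
    & (forall a r, N a -> in_Ah h r -> N (wmul r a))].

Definition acc_cond (F : fieldType) (sub : (weyl F -> Prop) -> Prop) :=
  forall N : nat -> weyl F -> Prop,
    (forall n, sub (N n)) ->
    (forall n a, N n a -> N n.+1 a) ->
    exists n, forall m, (n <= m)%N -> forall a, N m a -> N n a.

Definition noetherian_right (F : fieldType) (h : {poly F}) :=
  acc_cond (right_submod h).
Definition noetherian_left (F : fieldType) (h : {poly F}) :=
  acc_cond (left_submod h).

Definition free_mod (F : fieldType) (h : {poly F})
    (act : weyl F -> weyl F -> weyl F) :=
  exists (I : Type) (e : I -> weyl F),
    (forall a, exists n (idx : 'I_n -> I) (b : 'I_n -> weyl F),
        (forall i, in_Ah h (b i)) /\ a = \sum_(i < n) act (e (idx i)) (b i)) /\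
    (forall n (idx : 'I_n -> I) (b : 'I_n -> weyl F),
        injective idx -> (forall i, in_Ah h (b i)) ->
        \sum_(i < n) act (e (idx i)) (b i) = 0 -> forall i, b i = 0).

Definition free_right (F : fieldType) (h : {poly F}) :=
  free_mod h (fun e b => wmul e b).
Definition free_left (F : fieldType) (h : {poly F}) :=
  free_mod h (fun e b => wmul b e).

Definition nonzero_const (F : fieldType) (h : {poly F}) :=
  exists c : F, c != 0 /\ h = c%:P.

(* Main.v *)
From HB Require Import structures.
Require Import Defs.
From mathcomp Require Import all_boot all_order all_algebra.
From mathcomp Require Import zify.
From Stdlib Require Import Classical ClassicalEpsilon.
Set Implicit Arguments. Unset Strict Implicit. Unset Printing Implicit Defensive.
Import GRing.Theory.
Local Open Scope ring_scope.


Section Act.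
Variable F : fieldType.
Implicit Types (a b f g : weyl F) (p q : {poly F}).

Definition dx f : weyl F := map_poly (@deriv F) f.
Definition Dop f : weyl F := dx f + 'X * f.
Definition act a f : weyl F := \sum_(j < size a) (a`_j)%:P * iter j Dop f.

Lemma coef_dx f i : (dx f)`_i = (f`_i)^`().
Proof. by rewrite coef_map_id0 // deriv0. Qed.

Lemma dxD f g : dx (f + g) = dx f + dx g.
Proof. by apply/polyP=> i; rewrite coefD !coef_dx coefD derivD. Qed.

Lemma dxN f : dx (- f) = - dx f.
Proof. by apply/polyP=> i; rewrite coefN !coef_dx coefN derivN. Qed.

Lemma dx0 : dx 0 = 0.
Proof. by apply/polyP=> i; rewrite coef_dx !coef0 deriv0. Qed.

Lemma DopD f g : Dop (f + g) = Dop f + Dop g.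
Proof. by rewrite /Dop dxD mulrDr addrACA. Qed.

Lemma Dop0 : Dop 0 = 0.
Proof. by rewrite /Dop dx0 mulr0 addr0. Qed.

Lemma DopN f : Dop (- f) = - Dop f.
Proof. by rewrite /Dop dxN mulrN opprD. Qed.

Lemma iterD_D j f g : iter j Dop (f + g) = iter j Dop f + iter j Dop g.
Proof. by elim: j => //= j ->; rewrite DopD. Qed.

Lemma iterD_0 j : iter j Dop 0 = 0.
Proof. by elim: j => //= j ->; rewrite Dop0. Qed.

Lemma iterD_N j f : iter j Dop (- f) = - iter j Dop f.
Proof. by elim: j => //= j ->; rewrite DopN. Qed.

Lemma iterD_sum j I (r : seq I) (P : pred I) (G : I -> weyl F) :
  iter j Dop (\sum_(i <- r | P i) G i) = \sum_(i <- r | P i) iter j Dop (G i).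
Proof. by apply: (big_morph _ (@iterD_D j) (iterD_0 j)). Qed.

Lemma iterD_add i j f : iter i Dop (iter j Dop f) = iter (i + j) Dop f.
Proof. by rewrite iterD. Qed.

Lemma dxCM q g : dx (q%:P * g) = (q^`())%:P * g + q%:P * dx g.
Proof.
by apply/polyP=> i; rewrite coefD !coefCM !coef_dx coefCM derivM.
Qed.

Lemma DopCM q g : Dop (q%:P * g) = (q^`())%:P * g + q%:P * Dop g.
Proof.
rewrite /Dop dxCM mulrDr -addrA; congr (_ + _).
by rewrite mulrA (mulrC 'X) -mulrA.
Qed.

Lemma act_bound a f n : (size a <= n)%N ->
  act a f = \sum_(j < n) (a`_j)%:P * iter j Dop f.
Proof.
move=> le; rewrite /act (big_ord_widen n (fun j => (a`_j)%:P * iter j Dop f) le).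
rewrite big_mkcond; apply: eq_bigr => j _; case: ifP => // /negbT.
by rewrite -leqNgt => /(nth_default 0) ->; rewrite mul0r.
Qed.
End Act.


Section Leib.
Variable F : fieldType.
Implicit Types (a b f g : weyl F) (p q : {poly F}).

Lemma leibniz q g j : iter j (@Dop F) (q%:P * g) =
  \sum_(i < j.+1) ((q^`(i)) *+ 'C(j, i))%:P * iter (j - i) (@Dop F) g.
Proof.
elim: j => [|j IH].
  by rewrite big_ord1 /= bin0 mulr1n.
rewrite iterS IH (big_morph _ (@DopD F) (@Dop0 F)).
under eq_bigr do rewrite DopCM.
rewrite big_split /=.
rewrite [RHS]big_ord_recl /= bin0 mulr1n.
under [X in _ = _ + X]eq_bigr do rewrite /bump /= add1n binS mulrnDr polyCD mulrDl subSS.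
rewrite big_split /= addrA [LHS]addrC; congr (_ + _); last first.
  by apply: eq_bigr => i _; rewrite derivMn add0n.
rewrite big_ord_recl /= subn0 bin0 mulr1n -iterS; congr (_ + _).
rewrite [RHS]big_ord_recr /= bin_small // mulr0n polyC0 mul0r addr0.
apply: eq_bigr => i _; rewrite /bump /= add1n add0n.
by rewrite -iterS subnSK.
Qed.
End Leib.


Section Comp.
Variable F : fieldType.
Implicit Types (a b f g : weyl F) (p q : {poly F}).

Lemma act0l f : act 0 f = 0.
Proof. by rewrite /act size_poly0 big_ord0. Qed.

Lemma actDl a1 a2 f : act (a1 + a2) f = act a1 f + act a2 f.
Proof.
set n := maxn (size a1) (size a2).
have h1 : (size a1 <= n)%N by rewrite leq_maxl.
have h2 : (size a2 <= n)%N by rewrite leq_maxr.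
have h3 : (size (a1 + a2)%R <= n)%N by apply: leq_trans (size_polyD _ _) _.
rewrite (act_bound _ h1) (act_bound _ h2) (act_bound _ h3) -big_split /=.
by apply: eq_bigr => j _; rewrite coefD polyCD mulrDl.
Qed.

Lemma act_suml I (r : seq I) (P : pred I) (G : I -> weyl F) f :
  act (\sum_(i <- r | P i) G i) f = \sum_(i <- r | P i) act (G i) f.
Proof. by apply: (big_morph (fun a => act a f) (fun a b => actDl a b f) (act0l f)). Qed.

Lemma actDr a f g : act a (f + g) = act a f + act a g.
Proof.
by rewrite /act -big_split /=; apply: eq_bigr => j _; rewrite iterD_D mulrDr.
Qed.

Lemma act0r a : act a 0 = 0.
Proof. by rewrite /act big1 // => j _; rewrite iterD_0 mulr0. Qed.

Lemma actNr a f : act a (- f) = - act a f.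
Proof.
by rewrite /act -sumrN; apply: eq_bigr => j _; rewrite iterD_N mulrN.
Qed.

Lemma act_sumr I (r : seq I) (P : pred I) (G : I -> weyl F) a :
  act a (\sum_(i <- r | P i) G i) = \sum_(i <- r | P i) act a (G i).
Proof. by apply: (big_morph (act a) (actDr a) (act0r a)). Qed.

Lemma actZX c m f : act (c *: 'X^m) f = c%:P * iter m (@Dop F) f.
Proof.
rewrite (act_bound _ (size_scale_leq _ _ )) size_polyXn.
rewrite (bigD1 (Ordinal (ltnSn m))) //= coefZ coefXn eqxx mulr1 big1 ?addr0 //.
move=> j /negbTE nj; rewrite coefZ coefXn.
have -> : (nat_of_ord j == m) = false.
  by apply/negbTE; apply: contraFN nj => /eqP e; apply/eqP/val_inj.
by rewrite mulr0 mul0r.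
Qed.

Lemma act_wmul a b f : act (wmul a b) f = act a (act b f).
Proof.
rewrite /wmul act_suml [in RHS]/act; apply: eq_bigr => j _.
rewrite act_suml iterD_sum mulr_sumr; apply: eq_bigr => k _.
rewrite act_suml leibniz mulr_sumr; apply: eq_bigr => i _.
rewrite actZX mulrA -polyCM iterD_add mulrnAr.
by rewrite addnC.
Qed.
End Comp.


Section Assoc.
Variable F : fieldType.
Implicit Types (a b c f g : weyl F) (p q : {poly F}).

Lemma dxXn n : dx ('X^n : weyl F) = 0.
Proof.
apply/polyP=> i; rewrite coef_dx coefXn coef0.
by case: (i == n); rewrite -?polyC1 ?derivC ?deriv0.
Qed.

Lemma iterD1 j : iter j (@Dop F) 1 = 'X^j.
Proof.
elim: j => [|j IH] //=; rewrite IH /Dop dxXn add0r.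
by rewrite exprS.
Qed.

Lemma act1 a : act a 1 = a.
Proof.
rewrite /act; under eq_bigr do rewrite iterD1 mul_polyC.
by rewrite -poly_def coefK.
Qed.

Lemma wmulE a b : wmul a b = act a b.
Proof. by rewrite -[LHS]act1 act_wmul act1. Qed.

Lemma wmulA a b c : wmul (wmul a b) c = wmul a (wmul b c).
Proof. by rewrite !wmulE -!wmulE -[LHS]act1 -[RHS]act1 !act_wmul. Qed.

Lemma wmulDl a b c : wmul (a + b) c = wmul a c + wmul b c.
Proof. by rewrite !wmulE actDl. Qed.
Lemma wmulDr a b c : wmul a (b + c) = wmul a b + wmul a c.
Proof. by rewrite !wmulE actDr. Qed.
Lemma wmul0l a : wmul 0 a = 0.
Proof. by rewrite wmulE act0l. Qed.
Lemma wmul0r a : wmul a 0 = 0.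
Proof. by rewrite wmulE act0r. Qed.
Lemma wmulNr a b : wmul a (- b) = - wmul a b.
Proof. by rewrite !wmulE actNr. Qed.
Lemma wmulNl a b : wmul (- a) b = - wmul a b.
Proof. by apply/eqP; rewrite -addr_eq0 -wmulDl addNr wmul0l. Qed.
Lemma wmul_suml I (r : seq I) (P : pred I) (G : I -> weyl F) b :
  wmul (\sum_(i <- r | P i) G i) b = \sum_(i <- r | P i) wmul (G i) b.
Proof. by rewrite wmulE act_suml; apply: eq_bigr => i _; rewrite wmulE. Qed.
Lemma wmul_sumr I (r : seq I) (P : pred I) (G : I -> weyl F) a :
  wmul a (\sum_(i <- r | P i) G i) = \sum_(i <- r | P i) wmul a (G i).
Proof. by rewrite wmulE act_sumr; apply: eq_bigr => i _; rewrite wmulE. Qed.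

Lemma act_polyC p f : act (p%:P) f = p%:P * f.
Proof.
rewrite /act; have [->|nz] := eqVneq p 0; first by rewrite size_poly0 big_ord0 mul0r.
by rewrite size_polyC nz big_ord1 coefC eqxx.
Qed.

Lemma wmulCl p b : wmul (wpol p) b = p%:P * b.
Proof. by rewrite wmulE act_polyC. Qed.

Lemma wmul1l b : wmul 1 b = b.
Proof. by rewrite -[1]/(wpol 1) wmulCl mul1r. Qed.
Lemma wmul1r b : wmul b 1 = b.
Proof. by rewrite wmulE act1. Qed.
End Assoc.


Section Top.
Variable F : fieldType.
Implicit Types (a b c f g : weyl F) (p q : {poly F}).

Lemma coef_Dop f i : (Dop f)`_i = (f`_i)^`() + (if i == 0%N then 0 else f`_i.-1).
Proof. by rewrite coefD coef_dx coefXM. Qed.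

Lemma Dop_top f e : (size f <= e.+1)%N ->
  (size (Dop f) <= e.+2)%N /\ (Dop f)`_e.+1 = f`_e.
Proof.
move=> /leq_sizeP sf; split; last by rewrite coef_Dop sf // deriv0 add0r.
apply/leq_sizeP => i hi; rewrite coef_Dop sf ?deriv0 ?add0r; last by apply: ltnW.
case: i hi => // i hi /=; apply: sf; by [].
Qed.

Lemma iterD_top f e j : (size f <= e.+1)%N ->
  (size (iter j (@Dop F) f) <= (e + j).+1)%N /\ (iter j (@Dop F) f)`_(e + j) = f`_e.
Proof.
move=> sf; elim: j => [|j [IH1 IH2]]; first by rewrite addn0.
have [h1 h2] := Dop_top IH1.
by rewrite /= addnS h2 IH2.
Qed.

Lemma act_top a f d e : (size a <= d.+1)%N -> (size f <= e.+1)%N ->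
  (size (act a f) <= (d + e).+1)%N /\ (act a f)`_(d + e) = a`_d * f`_e.
Proof.
move=> sa sf; rewrite (act_bound _ sa); split.
  rewrite (leq_trans (size_sum _ _ _)) //; apply/bigmax_leqP => j _.
  rewrite mul_polyC (leq_trans (size_scale_leq _ _)) //.
  have [h1 _] := iterD_top j sf.
  by rewrite (leq_trans h1) // ltnS addnC leq_add2r -ltnS.
rewrite coef_sum big_ord_recr /= coefCM.
have [_ h2] := iterD_top d sf.
rewrite addnC h2.
rewrite big1 ?add0r // => j _; rewrite coefCM.
have [h1 _] := iterD_top j sf.
rewrite (leq_sizeP _ _ h1) ?mulr0 //.
by rewrite ltn_add2l.
Qed.

Lemma act_lead a f : a != 0 -> f != 0 ->
  size (act a f) = (size a + size f).-1 /\ lead_coef (act a f) = lead_coef a * lead_coef f.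
Proof.
move=> a0 f0.
have sa : (size a <= (size a).-1.+1)%N by rewrite prednK // size_poly_gt0.
have sf : (size f <= (size f).-1.+1)%N by rewrite prednK // size_poly_gt0.
have [s1 s2] := act_top sa sf.
have nz : a`_(size a).-1 * f`_(size f).-1 != 0.
  by rewrite mulf_neq0 // -/(lead_coef _) lead_coef_eq0.
have e : size (act a f) = ((size a).-1 + (size f).-1).+1.
  apply/eqP; rewrite eqn_leq s1 /=; apply: contraR nz; rewrite -ltnNge ltnS => h.
  by rewrite -s2; apply/eqP/(leq_sizeP _ _ h).
have -> : (size a + size f).-1 = ((size a).-1 + (size f).-1).+1.
  have pa : (0 < size a)%N by rewrite size_poly_gt0.
  have pf : (0 < size f)%N by rewrite size_poly_gt0.
  by rewrite -{1}(prednK pa) -{1}(prednK pf) addSn addnS.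
by split => //; rewrite /lead_coef e /= s2.
Qed.

Lemma wmul_eq0 a b : wmul a b = 0 -> a = 0 \/ b = 0.
Proof.
move=> h; have [->|a0] := eqVneq a 0; first by left.
have [->|b0] := eqVneq b 0; first by right.
have [s _] := act_lead a0 b0; move: s; rewrite -wmulE h size_poly0 => /esym.
move/eqP; rewrite -subn1 subn_eq0 => hle; exfalso.
have pa : (0 < size a)%N by rewrite size_poly_gt0.
have pf : (0 < size b)%N by rewrite size_poly_gt0.
move: hle; rewrite -(prednK pa) -(prednK pf).
by rewrite addnS.
Qed.
End Top.


Section W.
Variable F : fieldType.
Variable h : {poly F}.
Implicit Types (a b c f g : weyl F) (p q : {poly F}).

Definition Wt a (P M : nat) := forall j, h ^+ (j + P - M) %| a`_j.

Lemma dvdp_muln d p n : d %| p -> d %| p *+ n.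
Proof. by move=> hd; rewrite -mulr_natr dvdp_mulr. Qed.

Lemma dvdp_deriv1 n p : h ^+ n %| p -> h ^+ n.-1 %| p^`().
Proof.
case: n => [|n] /=; first by move=> _; rewrite expr0 dvd1p.
case/dvdpP => q ->; rewrite derivM deriv_exp /=.
apply: dvdp_add.
  by apply: dvdp_mull; rewrite exprS dvdp_mulIr.
by apply: dvdp_mull; apply: dvdp_muln; rewrite dvdp_mulIr.
Qed.

Lemma dvdp_derivn n i p : h ^+ n %| p -> h ^+ (n - i) %| p^`(i).
Proof.
elim: i => [|i IH] hd; first by rewrite subn0 derivn0.
by rewrite derivnS subnS; apply: dvdp_deriv1; apply: IH.
Qed.


Lemma Wt_sum I (r : seq I) (Q : pred I) (G : I -> weyl F) P M :
  (forall i, Q i -> Wt (G i) P M) -> Wt (\sum_(i <- r | Q i) G i) P M.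
Proof.
move=> hG j; rewrite coef_sum; apply: (big_ind (fun x => h ^+ (j + P - M) %| x)).
- exact: dvdp0.
- by move=> x y; apply: dvdp_add.
- by move=> i qi; apply: hG.
Qed.

Lemma Wt_add a b P M : Wt a P M -> Wt b P M -> Wt (a + b) P M.
Proof. by move=> ha hb j; rewrite coefD dvdp_add. Qed.

Lemma Wt_opp a P M : Wt a P M -> Wt (- a) P M.
Proof. by move=> ha j; rewrite coefN dvdpNr. Qed.

Lemma Wt0 P M : Wt 0 P M.
Proof. by move=> j; rewrite coef0 dvdp0. Qed.

Lemma Wt_ZX p m P M : h ^+ (m + P - M) %| p -> Wt (p *: 'X^m) P M.
Proof.
move=> hc j; rewrite coefZ coefXn; case: eqP => [->|_]; first by rewrite mulr1.
by rewrite mulr0 dvdp0.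
Qed.

Lemma Wt_mul a b P1 M1 P2 M2 : Wt a P1 M1 -> Wt b P2 M2 ->
  Wt (wmul a b) (P1 + P2) (M1 + M2).
Proof.
move=> ha hb; apply: Wt_sum => j _; apply: Wt_sum => k _; apply: Wt_sum => i _.
apply: Wt_ZX; apply: dvdp_muln.
have h1 := ha j; have h2 := dvdp_derivn i (hb k).
apply: dvdp_trans (dvdp_mul h1 h2); rewrite -exprD; apply: dvdp_exp2l.
have := ltn_ord i; lia.
Qed.

Lemma Wt_mono a P M P' M' : (P' + M <= P + M')%N -> Wt a P M -> Wt a P' M'.
Proof.
move=> le ha j; apply: dvdp_trans (ha j); apply: dvdp_exp2l; lia.
Qed.
End W.


Section Ah.
Variable F : fieldType.
Variable h : {poly F}.
Hypothesis hnz : h != 0.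
Implicit Types (a b c f g : weyl F) (p q : {poly F}).

Lemma Wt_C p P M : h ^+ (P - M) %| p -> Wt h (wpol p) P M.
Proof.
move=> hp j; rewrite /wpol coefC; case: eqP => [->|_]; first by rewrite add0n.
exact: dvdp0.
Qed.

Lemma Wt_wy : Wt h (wy F) 0 1.
Proof.
move=> j; rewrite /wy coefX; case: eqP => [->|_]; first by rewrite expr0 dvd1p.
exact: dvdp0.
Qed.

Lemma Wt_yh : Wt h (wmul (wy F) (wpol h)) 0 0.
Proof.
apply: (@Wt_mono _ _ _ 1 1); first by [].
apply: (Wt_mul Wt_wy); apply: Wt_C; by rewrite expr1 dvdpp.
Qed.

Lemma Ah_Wt a : in_Ah h a -> Wt h a 0 0.
Proof.
elim => {a}.
- by move=> c; apply: Wt_C; rewrite expr0 dvd1p.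
- by apply: Wt_C; rewrite expr0 dvd1p.
- exact: Wt_yh.
- by move=> a b _ ha _ hb; apply: Wt_add.
- by move=> a b _ ha _ hb; apply: (Wt_mul ha hb).
Qed.

Lemma Ah0 : in_Ah h 0.
Proof. by have := Ah_scalar h 0; rewrite /wpol !polyC0. Qed.

Lemma Ah_opp a : in_Ah h a -> in_Ah h (- a).
Proof.
move=> ha; have := Ah_mul (Ah_scalar h (-1)) ha.
by rewrite wmulCl polyCN polyC1 polyCN polyC1 mulN1r.
Qed.

Lemma Ah_sub a b : in_Ah h a -> in_Ah h b -> in_Ah h (a - b).
Proof. by move=> ha hb; apply: Ah_add => //; apply: Ah_opp. Qed.

Lemma Ah_sum I (r : seq I) (Q : pred I) (G : I -> weyl F) :
  (forall i, Q i -> in_Ah h (G i)) -> in_Ah h (\sum_(i <- r | Q i) G i).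
Proof.
move=> hG; apply: (big_ind (in_Ah h)); [exact: Ah0 | exact: Ah_add | exact: hG].
Qed.

Lemma Ah_Xn n : in_Ah h (wpol ('X^n)).
Proof.
elim: n => [|n IH]; first by rewrite expr0 -polyC1; apply: Ah_scalar.
have := Ah_mul IH (Ah_x h); rewrite wmulCl /wx /wpol -polyCM.
by rewrite exprSr.
Qed.

Lemma Ah_pol p : in_Ah h (wpol p).
Proof.
rewrite -(coefK p) poly_def /wpol raddf_sum /=.
apply: Ah_sum => i _; rewrite -mul_polyC.
have := Ah_mul (Ah_scalar h p`_i) (Ah_Xn i).
by rewrite wmulCl /wpol polyCM.
Qed.

Fixpoint Yp (d : nat) : weyl F :=
  if d is d'.+1 then wmul (Yp d') (wmul (wy F) (wpol h)) else 1.

Lemma Ah_Yp d : in_Ah h (Yp d).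
Proof.
elim: d => [|d IH] /=; first by rewrite -[1]/(wpol 1) -polyC1; apply: Ah_scalar.
exact: Ah_mul IH (Ah_yh h).
Qed.

Lemma Yp_lead d : Yp d != 0 /\ size (Yp d) = d.+1 /\ lead_coef (Yp d) = h ^+ d.
Proof.
have yh0 : wmul (wy F) (wpol h) != 0.
  by apply/eqP => /wmul_eq0 [] /eqP; rewrite /wy ?polyX_eq0 // /wpol polyC_eq0 (negPf hnz).
have [syh lyh] : size (wmul (wy F) (wpol h)) = 2%N /\ lead_coef (wmul (wy F) (wpol h)) = h.
  have x0 : (wy F) != 0 by rewrite /wy polyX_eq0.
  have h0 : wpol h != 0 by rewrite /wpol polyC_eq0.
  have [s l] := act_lead x0 h0; rewrite wmulE s l /wy /wpol size_polyX size_polyC hnz.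
  by rewrite lead_coefX lead_coefC mul1r.
elim: d => [|d [n0 [s l]]] /=.
  by rewrite size_poly1 lead_coef1 expr0 oner_neq0.
have [s' l'] := act_lead n0 yh0; rewrite wmulE s' l' s syh l lyh.
split; last by split; [rewrite addn2 | rewrite exprSr].
by rewrite -size_poly_eq0 s' s syh addn2.
Qed.

Lemma Wt_Ah r : Wt h r 0 0 -> in_Ah h r.
Proof.
move: {2}(size r) (leqnn (size r)) => n; elim: n r => [|n IH] r sr wr.
  by move: sr; rewrite leqn0 size_poly_eq0 => /eqP ->; apply: Ah0.
have [->|r0] := eqVneq r 0; first exact: Ah0.
set d := (size r).-1.
have sr' : size r = d.+1 by rewrite /d prednK // size_poly_gt0.
have hd : h ^+ d %| lead_coef r by have := wr d; rewrite addn0 subn0.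
set g := lead_coef r %/ h ^+ d.
have gh : g * h ^+ d = lead_coef r by rewrite divpK.
have g0 : g != 0 by apply: contraNneq r0 => e; rewrite -lead_coef_eq0 -gh e mul0r.
set t := wmul (wpol g) (Yp d).
have [yn [ys yl]] := Yp_lead d.
have ts : size t = d.+1.
  by rewrite /t wmulCl mul_polyC size_scale ?ys // polyC_eq0.
have tl : lead_coef t = lead_coef r.
  by rewrite /t wmulCl lead_coefM yl lead_coefC gh.
have At : in_Ah h t by apply: Ah_mul (Ah_pol g) (Ah_Yp d).
have -> : r = (r - t) + t by rewrite subrK.
apply: Ah_add => //; apply: IH.
  rewrite -ltnS (leq_trans _ sr) // sr' ltnS.
  apply/leq_sizeP => j hj; rewrite coefB.
  have [<-|hj'] := eqVneq d j.
    by move: tl; rewrite /lead_coef ts sr' /= => ->; rewrite subrr.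
  have hj2 : (d < j)%N by rewrite ltn_neqAle hj' hj.
  by rewrite !nth_default ?subrr // ?ts ?sr'.
by apply: Wt_add => //; apply: Wt_opp; apply: Ah_Wt.
Qed.
End Ah.


Section Free.
Variable F : fieldType.
Variable h : {poly F}.
Hypothesis hnz : h != 0.
Variable mul : weyl F -> weyl F -> weyl F.
Hypothesis mA : forall a b c, mul (mul a b) c = mul a (mul b c).
Hypothesis mDl : forall a b c, mul (a + b) c = mul a c + mul b c.
Hypothesis mDr : forall a b c, mul a (b + c) = mul a b + mul a c.
Hypothesis m1l : forall a, mul 1 a = a.
Hypothesis mdom : forall a b, mul a b = 0 -> a = 0 \/ b = 0.
Hypothesis munit : forall a b, mul a b = 1 -> exists c : F, c != 0 /\ a = wpol c%:P.
Hypothesis mscal : forall (c : F) z, mul (wpol c%:P) z = c%:P%:P * z.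
Hypothesis mpol : forall p q, mul (wpol p) (wpol q) = wpol (p * q).
Hypothesis mAh : forall a b, in_Ah h a -> in_Ah h b -> in_Ah h (mul a b).
Hypothesis mWt : forall a b P1 M1 P2 M2, Wt h a P1 M1 -> Wt h b P2 M2 ->
  Wt h (mul a b) (P1 + P2) (M1 + M2).

Lemma m0l a : mul 0 a = 0.
Proof. by have H := mDl 0 0 a; rewrite addr0 in H; apply: (addrI (mul 0 a)); rewrite addr0 -H. Qed.
Lemma m0r a : mul a 0 = 0.
Proof. by have H := mDr a 0 0; rewrite addr0 in H; apply: (addrI (mul a 0)); rewrite addr0 -H. Qed.
Lemma mNl a b : mul (- a) b = - mul a b.
Proof. by apply/eqP; rewrite -subr_eq0 opprK -mDl addNr m0l. Qed.
Lemma mNr a b : mul a (- b) = - mul a b.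
Proof. by apply/eqP; rewrite -subr_eq0 opprK -mDr addNr m0r. Qed.
Lemma m_suml I (r : seq I) (P : pred I) (G : I -> weyl F) b :
  mul (\sum_(i <- r | P i) G i) b = \sum_(i <- r | P i) mul (G i) b.
Proof. by apply: (big_morph (fun a => mul a b) (fun x y => mDl x y b) (m0l b)). Qed.
Lemma m_sumr I (r : seq I) (P : pred I) (G : I -> weyl F) a :
  mul a (\sum_(i <- r | P i) G i) = \sum_(i <- r | P i) mul a (G i).
Proof. by apply: (big_morph (mul a) (mDr a) (m0r a)). Qed.

Variable I : Type.
Variable e : I -> weyl F.
Hypothesis span : forall a, exists n (idx : 'I_n -> I) (b : 'I_n -> weyl F),
        (forall i, in_Ah h (b i)) /\ a = \sum_(i < n) mul (e (idx i)) (b i).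
Hypothesis indep : forall n (idx : 'I_n -> I) (b : 'I_n -> weyl F),
        injective idx -> (forall i, in_Ah h (b i)) ->
        \sum_(i < n) mul (e (idx i)) (b i) = 0 -> forall i, b i = 0.

Definition good (s : seq (weyl F * weyl F)) :=
  forall p, p \in s -> (exists i, e i = p.1) /\ in_Ah h p.2.
Definition sumS (s : seq (weyl F * weyl F)) := \sum_(p <- s) mul p.1 p.2.
Definition CS (s : seq (weyl F * weyl F)) v := \sum_(p <- s | p.1 == v) p.2.

Lemma span_seq a : exists s, good s /\ a = sumS s.
Proof.
have [n [idx [b [hb ->]]]] := span a.
exists [seq (e (idx t), b t) | t <- index_enum 'I_n]; split.
  by move=> p /mapP [t _ ->] /=; split => //; exists (idx t).
by rewrite /sumS big_map.
Qed.

Lemma partition s : sumS s = \sum_(v <- undup (map fst s)) mul v (CS s v).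
Proof.
set keys := undup _.
have uk : uniq keys by apply: undup_uniq.
transitivity (\sum_(p <- s) \sum_(v <- keys) (if p.1 == v then mul p.1 p.2 else 0)).
  rewrite /sumS; apply: eq_big_seq => p ps.
  have pk : p.1 \in keys by rewrite mem_undup; apply: map_f.
  rewrite (bigD1_seq p.1) //= eqxx big1 ?addr0 // => v.
  by rewrite eq_sym => /negbTE ->.
rewrite exchange_big; apply: eq_bigr => v _.
rewrite /CS m_sumr [RHS]big_mkcond; apply: eq_bigr => p _.
by case: eqP => // ->.
Qed.

Lemma CS0 s : good s -> sumS s = 0 -> forall v, CS s v = 0.
Proof.
move=> gs s0 v.
set keys := undup (map fst s).
have uk : uniq keys by apply: undup_uniq.
have ex : forall k : 'I_(size keys), exists i, e i = keys`_k.
  move=> k; have : keys`_k \in keys by apply: mem_nth.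
  rewrite mem_undup => /mapP [p ps ->].
  by have [[i ei] _] := gs p ps; exists i.
pose idx k := proj1_sig (constructive_indefinite_description _ (ex k)).
have eidx k : e (idx k) = keys`_k by rewrite /idx; case: constructive_indefinite_description.
pose b k := CS s keys`_k.
have hb k : in_Ah h (b k).
  rewrite /b /CS big_seq_cond; apply: Ah_sum => p /andP [ps _].
  by have [_ ] := gs p ps.
have inj : injective idx.
  move=> k1 k2 ek; apply/val_inj/eqP.
  by rewrite -(nth_uniq 0 (ltn_ord k1) (ltn_ord k2) uk) -!eidx ek.
have sum0 : \sum_(k < size keys) mul (e (idx k)) (b k) = 0.
  apply: (etrans _ s0); rewrite partition (big_nth 0) big_mkord.
  by apply: eq_bigr => k _; rewrite eidx.
have hz := indep inj hb sum0.
case vk: (v \in keys).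
  have ik : (index v keys < size keys)%N by rewrite index_mem vk.
  by have := hz (Ordinal ik); rewrite /b /= nth_index // vk.
apply: big1_seq => p /andP [/eqP pv ps].
by move: vk; rewrite mem_undup -pv map_f.
Qed.


Lemma Ah1 : in_Ah h 1.
Proof. by rewrite -[1]/(wpol 1) -polyC1; apply: Ah_scalar. Qed.

Lemma CS_cat_map (s : seq (weyl F * weyl F)) (f : weyl F -> weyl F) (t : weyl F * weyl F) (v : weyl F) :
  CS ([seq (p.1, f p.2) | p <- s] ++ [:: t]) v =
  \sum_(p <- s | p.1 == v) f p.2 + (if t.1 == v then t.2 else 0).
Proof.
rewrite /CS big_cat big_map /= big_cons big_nil addr0.
by case: ifP.
Qed.

Lemma free_const : nonzero_const h.
Proof.
have [s1 [g1 e1]] := span_seq 1.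
have [p0 p0s] : exists p0, p0 \in s1.
  case: s1 g1 e1 => [|p s] _ e1; last by exists p; rewrite mem_head.
  by exfalso; move: e1; rewrite /sumS big_nil => /eqP; rewrite oner_eq0.
set e0 := p0.1.
have [[i0 ei0] _] := g1 p0 p0s.
have e0nz : e0 != 0.
  apply/eqP => ez.
  have gs : good [:: (e0, 1)].
    move=> p; rewrite inE => /eqP -> /=; split; [by exists i0 | exact: Ah1].
  have := CS0 gs _ e0; rewrite /sumS /CS !big_cons !big_nil /= eqxx addr0 ez m0l.
  by move=> /(_ erefl) /eqP; rewrite addr0 oner_eq0.
set N := size e0.
set u := mul e0 (wpol (h ^+ N)).
have uAh : in_Ah h u.
  apply: (Wt_Ah hnz); apply: (@Wt_mono _ _ _ (0 + N) (N + 0) 0 0 _ (mWt _ _)); first by rewrite add0n addn0.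
    move=> j; case: (ltnP j N) => jN; first by rewrite (_ : (j + 0 - N)%N = 0%N) ?expr0 ?dvd1p //; lia.
    by rewrite nth_default // dvdp0.
  by apply: Wt_C; rewrite subn0 dvdpp.
have hN0 : wpol (h ^+ N) != 0 by rewrite /wpol polyC_eq0 expf_neq0.
have u0 : u != 0.
  by apply/eqP => /mdom [] /eqP; [rewrite (negPf e0nz) | rewrite (negPf hN0)].
pose s' := [seq (p.1, mul p.2 u) | p <- s1] ++ [:: (e0, - wpol (h ^+ N))].
have gs' : good s'.
  move=> p; rewrite mem_cat => /orP [/mapP [q qs ->]|] /=.
    by have [ex hq] := g1 q qs; split => //; apply: mAh.
  rewrite inE => /eqP -> /=; split; first by exists i0.
  by apply: Ah_opp; apply: Ah_pol.
have ss' : sumS s' = 0.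
  rewrite /sumS big_cat big_map big_cons big_nil /= addr0.
  under eq_bigr do rewrite -mA.
  by rewrite -m_suml -/(sumS s1) -e1 m1l mNr -/u subrr.
have C0 := CS0 gs' ss'.
have cs1 : forall v, v != e0 -> CS s1 v = 0.
  move=> v nv; have := C0 v; rewrite /s' (CS_cat_map s1 (fun b => mul b u)) /= eq_sym (negPf nv) addr0 -m_suml.
  by move/mdom => [] // /eqP; rewrite (negPf u0).
have e1' : 1 = mul e0 (CS s1 e0).
  rewrite e1 partition (bigD1_seq e0) ?undup_uniq //; last first.
    by rewrite mem_undup; apply: map_f.
  rewrite big1; first exact: addr0.
  by move=> v nv; rewrite cs1 // m0r.
have [c [c0 ec]] := munit (esym e1').
have [s2 [g2 e2]] := span_seq (wy F).
set z := mul (wy F) (wpol h).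
have zAh : in_Ah h z.
  apply: (Wt_Ah hnz); apply: (@Wt_mono _ _ _ (0 + 1) (1 + 0)) => //.
  by apply: mWt; [apply: Wt_wy | apply: Wt_C; rewrite subn0 expr1 dvdpp].
set w := mul (wpol c^-1%:P) z.
have wAh : in_Ah h w by apply: mAh (Ah_pol _ _) zAh.
pose s3 := [seq (p.1, mul p.2 (wpol h)) | p <- s2] ++ [:: (e0, - w)].
have gs3 : good s3.
  move=> p; rewrite mem_cat => /orP [/mapP [q qs ->]|] /=.
    by have [ex hq] := g2 q qs; split => //; apply: mAh => //; apply: Ah_pol.
  rewrite inE => /eqP -> /=; split; first by exists i0.
  by apply: Ah_opp.
have ew : mul e0 w = z.
  by rewrite /w ec -mA mpol -polyCM mulfV // /wpol !polyC1 m1l.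
have ss3 : sumS s3 = 0.
  rewrite /sumS big_cat big_map big_cons big_nil /= addr0.
  under eq_bigr do rewrite -mA.
  by rewrite -m_suml -/(sumS s2) -e2 mNr ew subrr.
have := CS0 gs3 ss3 e0; rewrite /s3 (CS_cat_map s2 (fun b => mul b (wpol h))) /= eqxx -m_suml -/(CS s2 e0).
rewrite /w /z -mA -mNl -mDl => /mdom [/eqP|/eqP]; last first.
  by rewrite /wpol polyC_eq0 (negPf hnz).
rewrite subr_eq0 => /eqP eC.
have : in_Ah h (CS s2 e0).
  by rewrite /CS big_seq_cond; apply: Ah_sum => p /andP [ps _]; have [_] := g2 p ps.
move=> /Ah_Wt /(_ 1%N); rewrite eC mscal coefCM /wy coefX /= mulr1 addn0 subn0 expr1.
move=> /dvdp_leq; rewrite polyC_eq0 invr_eq0 c0 size_polyC invr_eq0 c0 => /(_ isT) hs.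
have : size h == 1%N by rewrite eqn_leq hs lt0n size_poly_eq0 hnz.
by case/size_poly1P => c' c'0 ->; exists c'.
Qed.
End Free.


Section Inst.
Variable F : fieldType.
Implicit Types (a b c f g z : weyl F) (p q : {poly F}).

Lemma iterD_scal (k : F) j f : iter j (@Dop F) (k%:P%:P * f) = k%:P%:P * iter j (@Dop F) f.
Proof. by elim: j => //= j ->; rewrite DopCM derivC polyC0 mul0r add0r. Qed.

Lemma wmul_scalr (k : F) z : wmul z (wpol k%:P) = k%:P%:P * z.
Proof.
rewrite wmulE; transitivity (k%:P%:P * act z 1); last by rewrite act1.
rewrite -[wpol k%:P]mulr1 /act mulr_sumr; apply: eq_bigr => j _.
by rewrite iterD_scal mulrCA.
Qed.

Lemma wmul_unit a b : wmul a b = 1 -> exists c : F, c != 0 /\ a = wpol c%:P.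
Proof.
move=> ab.
have a0 : a != 0 by apply: contra_eq_neq ab => ->; rewrite wmul0l eq_sym oner_neq0.
have b0 : b != 0 by apply: contra_eq_neq ab => ->; rewrite wmul0r eq_sym oner_neq0.
have [s _] := act_lead a0 b0; rewrite -wmulE ab size_poly1 in s.
have pa : (0 < size a)%N by rewrite size_poly_gt0.
have pb : (0 < size b)%N by rewrite size_poly_gt0.
have sa : size a = 1%N by lia.
have sb : size b = 1%N by lia.
have ea : a = (a`_0)%:P by apply/size1_polyC; rewrite sa.
have eb : b = (b`_0)%:P by apply/size1_polyC; rewrite sb.
move: ab; rewrite ea eb wmulCl -polyCM -polyC1 => /polyC_inj ab.
have a00 : a`_0 != 0 by apply: contra_eq_neq ab => ->; rewrite mul0r eq_sym oner_neq0.
have b00 : b`_0 != 0 by apply: contra_eq_neq ab => ->; rewrite mulr0 eq_sym oner_neq0.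
have := size_mul a00 b00; rewrite ab size_poly1 => hs; change (1%N = (size (a`_0)%R + size (b`_0)%R).-1) in hs.
have pa' : (0 < size (a`_0)%R)%N by rewrite size_poly_gt0.
have pb' : (0 < size (b`_0)%R)%N by rewrite size_poly_gt0.
have : size (a`_0)%R == 1%N by apply/eqP; lia.
case/size_poly1P => c c0 ec; exists c; split => //.
by rewrite /wpol -ec -ea.
Qed.

Lemma wmul_unit_r a b : wmul a b = 1 -> exists c : F, c != 0 /\ b = wpol c%:P.
Proof.
move=> ab.
have a0 : a != 0 by apply: contra_eq_neq ab => ->; rewrite wmul0l eq_sym oner_neq0.
have b0 : b != 0 by apply: contra_eq_neq ab => ->; rewrite wmul0r eq_sym oner_neq0.
have [s _] := act_lead a0 b0; rewrite -wmulE ab size_poly1 in s.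
have pa : (0 < size a)%N by rewrite size_poly_gt0.
have pb : (0 < size b)%N by rewrite size_poly_gt0.
have sa : size a = 1%N by lia.
have sb : size b = 1%N by lia.
have ea : a = (a`_0)%:P by apply/size1_polyC; rewrite sa.
have eb : b = (b`_0)%:P by apply/size1_polyC; rewrite sb.
move: ab; rewrite ea eb wmulCl -polyCM -polyC1 => /polyC_inj ab.
rewrite mulrC in ab.
have a00 : b`_0 != 0 by apply: contra_eq_neq ab => ->; rewrite mul0r eq_sym oner_neq0.
have b00 : a`_0 != 0 by apply: contra_eq_neq ab => ->; rewrite mulr0 eq_sym oner_neq0.
have := size_mul a00 b00; rewrite ab size_poly1 => hs; change (1%N = (size (b`_0)%R + size (a`_0)%R).-1) in hs.
have pa' : (0 < size (b`_0)%R)%N by rewrite size_poly_gt0.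
have pb' : (0 < size (a`_0)%R)%N by rewrite size_poly_gt0.
have : size (b`_0)%R == 1%N by apply/eqP; lia.
case/size_poly1P => c c0 ec; exists c; split => //.
by rewrite /wpol -ec -eb.
Qed.

Lemma free_right_const (h : {poly F}) : h != 0 -> free_right h -> nonzero_const h.
Proof.
move=> hnz [I [e [sp ind]]].
refine (@free_const F h hnz (@wmul F) _ _ _ _ _ _ _ _ _ _ _ _ sp ind).
- exact: wmulA.
- exact: wmulDl.
- exact: wmulDr.
- exact: wmul1l.
- exact: wmul_eq0.
- exact: wmul_unit.
- by move=> c z; rewrite wmulCl.
- by move=> p q; rewrite wmulCl /wpol polyCM.
- by move=> a b ha hb; apply: Ah_mul.
- by move=> a b P1 M1 P2 M2; apply: Wt_mul.
Qed.

Lemma free_left_const (h : {poly F}) : h != 0 -> free_left h -> nonzero_const h.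
Proof.
move=> hnz [I [e [sp ind]]].
refine (@free_const F h hnz (fun a b => wmul b a) _ _ _ _ _ _ _ _ _ _ _ _ sp ind).
- by move=> a b c; rewrite wmulA.
- by move=> a b c; rewrite wmulDr.
- by move=> a b c; rewrite wmulDl.
- exact: wmul1r.
- by move=> a b /wmul_eq0 [] ->; [right|left].
- by move=> a b /wmul_unit_r.
- by move=> c z; rewrite wmul_scalr.
- by move=> p q; rewrite wmulCl /wpol polyCM mulrC.
- by move=> a b ha hb; apply: Ah_mul.
- by move=> a b P1 M1 P2 M2 h1 h2; rewrite addnC (addnC M1); apply: Wt_mul.
Qed.

Lemma Wt_Xn (h : {poly F}) n : Wt h ('X^n) 0 n.
Proof.
move=> j; rewrite coefXn; case: eqP => [->|_].
  by rewrite addn0 subnn expr0 dvd1p.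
exact: dvdp0.
Qed.

Lemma Wt_X_const (h : {poly F}) n : h != 0 -> Wt h ('X^(n.+1)) 0 n -> nonzero_const h.
Proof.
move=> hnz /(_ n.+1); rewrite coefXn eqxx addn0 subSnn expr1 dvdp1.
by case/size_poly1P => c c0 ->; exists c.
Qed.

Lemma noeth_right_const (h : {poly F}) : h != 0 -> noetherian_right h -> nonzero_const h.
Proof.
move=> hnz acc.
have sub : forall n, right_submod h (fun a => Wt h a 0 n).
  move=> n; split.
  - exact: Wt0.
  - by move=> a b; apply: Wt_add.
  - move=> a r ha /Ah_Wt hr; apply: (@Wt_mono _ _ _ (0 + 0) (n + 0)); first by rewrite !addn0.
    exact: Wt_mul ha hr.
have inc : forall n a, Wt h a 0 n -> Wt h a 0 n.+1.
  by move=> n a; apply: Wt_mono; rewrite !add0n.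
have [n Hn] := acc (fun n a => Wt h a 0 n) sub inc.
apply: (Wt_X_const (n := n) hnz); apply: (Hn n.+1) => //; exact: Wt_Xn.
Qed.

Lemma noeth_left_const (h : {poly F}) : h != 0 -> noetherian_left h -> nonzero_const h.
Proof.
move=> hnz acc.
have sub : forall n, left_submod h (fun a => Wt h a 0 n).
  move=> n; split.
  - exact: Wt0.
  - by move=> a b; apply: Wt_add.
  - move=> a r ha /Ah_Wt hr; apply: (@Wt_mono _ _ _ (0 + 0) (0 + n)); first by rewrite !add0n.
    exact: Wt_mul hr ha.
have inc : forall n a, Wt h a 0 n -> Wt h a 0 n.+1.
  by move=> n a; apply: Wt_mono; rewrite !add0n.
have [n Hn] := acc (fun n a => Wt h a 0 n) sub inc.
apply: (Wt_X_const (n := n) hnz); apply: (Hn n.+1) => //; exact: Wt_Xn.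
Qed.

Lemma const_Ah (h : {poly F}) : nonzero_const h -> forall a, in_Ah h a.
Proof.
move=> [c [c0 ->]] a; have hnz : c%:P != 0 by rewrite polyC_eq0.
apply: (Wt_Ah hnz) => j; rewrite addn0 subn0 -rmorphXn.
apply/dvdpP; exists ((c ^+ j)^-1%:P * a`_j).
by rewrite mulrC mulrA -polyCM mulfV ?mul1r // expf_neq0.
Qed.
End Inst.


Lemma ex_min (Q : nat -> Prop) k : Q k -> exists m, Q m /\ forall k', Q k' -> (m <= k')%N.
Proof.
elim: k {-2}k (leqnn k) => [|n IH] k le Qk.
  by exists k; split => // k' _; move: le; rewrite leqn0 => /eqP ->.
have [[k' [Qk' lt]]|no] := classic (exists k', Q k' /\ (k' < k)%N).
  by apply: (IH k') => //; rewrite -ltnS (leq_trans lt le).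
exists k; split => // k' Qk'; rewrite leqNgt; apply/negP => lt.
by apply: no; exists k'.
Qed.

Lemma stab1 (Q : nat -> nat -> Prop) :
  (forall n n' k k', (n <= n')%N -> (k <= k')%N -> Q n k -> Q n' k') ->
  exists N, forall n, (N <= n)%N -> forall k, Q n k -> Q N k.
Proof.
move=> mono.
have [[n1 [k1 q1]]|no] := classic (exists n k, Q n k); last first.
  by exists 0%N => n _ k q; exfalso; apply: no; exists n, k.
have [k0 [[n0 q0] mk]] := @ex_min (fun k => exists n, Q n k) k1 (ex_intro (fun n => Q n k1) n1 q1).
exists n0 => n le k q.
by apply: mono q0 => //; apply: mk; exists n.
Qed.

Lemma stab_fin (P : nat -> nat -> nat -> Prop) :
  (forall d n n' k k', (n <= n')%N -> (k <= k')%N -> P d n k -> P d n' k') ->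
  forall D, exists N, forall d, (d < D)%N -> forall n, (N <= n)%N -> forall k, P d n k -> P d N k.
Proof.
move=> mono; elim=> [|D [N1 IH]]; first by exists 0%N.
have [N2 H2] := stab1 (mono D).
exists (maxn N1 N2) => d ld n ln k p.
move: ld; rewrite ltnS leq_eqVlt => /orP [/eqP ed|ld].
  rewrite ed in p *.
  apply: (mono _ N2 _ k k) => //; first by rewrite leq_maxr.
  apply: H2 p; exact: leq_trans (leq_maxr _ _) ln.
apply: (mono _ N1 _ k k) => //; first by rewrite leq_maxl.
apply: IH p => //; exact: leq_trans (leq_maxl _ _) ln.
Qed.

Lemma stab2 (P : nat -> nat -> nat -> Prop) :
  (forall d d' n n' k k', (d <= d')%N -> (n <= n')%N -> (k <= k')%N -> P d n k -> P d' n' k') ->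
  exists N, forall n, (N <= n)%N -> forall d k, P d n k -> P d N k.
Proof.
move=> mono.
have monoR : forall n n' k k', (n <= n')%N -> (k <= k')%N ->
    (exists d, P d n k) -> (exists d, P d n' k').
  by move=> n n' k k' a b [d p]; exists d; apply: (mono d d n n' k k').
have [n0 H0] := stab1 monoR.
have [[k1 r1]|no] := classic (exists k, exists d, P d n0 k); last first.
  exists n0 => n le d k p; exfalso; apply: no; exists k.
  by apply: (H0 n le k); exists d.
have [ks [[ds ps] mk]] := @ex_min (fun k => exists d, P d n0 k) k1 r1.
have monoD : forall d n n' k k', (n <= n')%N -> (k <= k')%N -> P d n k -> P d n' k'.
  by move=> d n n' k k' a b; apply: (mono d d).
have [N1 H1] := stab_fin monoD ds.
exists (maxn n0 N1) => n le d k p.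
case: (ltnP d ds) => ld.
  apply: (mono d d N1 _ k k) => //; first by rewrite leq_maxr.
  apply: H1 p => //; exact: leq_trans (leq_maxr _ _) le.
have [d' p'] := H0 n (leq_trans (leq_maxl _ _) le) k (ex_intro _ d p).
have kk : (ks <= k)%N by apply: mk; exists d'.
apply: (mono ds d n0 _ ks k) => //; first by rewrite leq_maxl.
Qed.


Section Noeth.
Variable F : fieldType.
Variable mul : weyl F -> weyl F -> weyl F.
Hypothesis H1 : forall (a : weyl F) (q : {poly F}) d, (size a <= d.+1)%N ->
  (size (mul a (wpol q)) <= d.+1)%N /\ (mul a (wpol q))`_d = a`_d * q.
Hypothesis H2 : forall (a : weyl F) d, (size a <= d.+1)%N ->
  (size (mul a (wy F)) <= d.+2)%N /\ (mul a (wy F))`_d.+1 = a`_d.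
Hypothesis H3 : forall (a : weyl F), mul a (wpol (-1)%:P) = - a.

Definition gsub (N : weyl F -> Prop) :=
  [/\ N 0, (forall a b, N a -> N b -> N (a + b)) & (forall a r, N a -> N (mul a r))].

Definition L (N : weyl F -> Prop) d (p : {poly F}) :=
  exists a, [/\ N a, (size a <= d.+1)%N & a`_d = p].

Section OneN.
Variable N : weyl F -> Prop.
Hypothesis sN : gsub N.

Lemma N_opp a : N a -> N (- a).
Proof. by case: sN => _ _ hm na; rewrite -H3; apply: hm. Qed.

Lemma L0 d : L N d 0.
Proof. by case: sN => n0 _ _; exists 0; rewrite size_poly0 coef0. Qed.

Lemma LD d p q : L N d p -> L N d q -> L N d (p + q).
Proof.
case: sN => _ hD _ [a [na sa <-]] [b [nb sb <-]]; exists (a + b); split.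
- exact: hD.
- by apply: leq_trans (size_polyD _ _) _; rewrite geq_max sa sb.
- by rewrite coefD.
Qed.

Lemma LM d p q : L N d p -> L N d (p * q).
Proof.
case: sN => _ _ hM [a [na sa <-]]; have [s c] := H1 q sa.
by exists (mul a (wpol q)); split => //; apply: hM.
Qed.

Lemma LS d p : L N d p -> L N d.+1 p.
Proof.
case: sN => _ _ hM [a [na sa <-]]; have [s c] := H2 sa.
by exists (mul a (wy F)); split => //; apply: hM.
Qed.
End OneN.

Lemma L_sub (N N' : weyl F -> Prop) d p : (forall a, N a -> N' a) -> L N d p -> L N' d p.
Proof. by move=> hs [a [na sa ca]]; exists a; split => //; apply: hs. Qed.

Lemma gacc (N : nat -> weyl F -> Prop) :
  (forall n, gsub (N n)) -> (forall n a, N n a -> N n.+1 a) ->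
  exists n, forall m, (n <= m)%N -> forall a, N m a -> N n a.
Proof.
move=> sN inc.
have incl : forall n m, (n <= m)%N -> forall a, N n a -> N m a.
  move=> n m /subnK <-; elim: (m - n)%N => // k IH a na.
  by rewrite addSn; apply: inc; apply: IH.
pose P d n k := exists p, [/\ L (N n) d p, p != 0 & (size p <= k)%N].
have mono : forall d d' n n' k k', (d <= d')%N -> (n <= n')%N -> (k <= k')%N ->
    P d n k -> P d' n' k'.
  move=> d d' n n' k k' dd nn kk [p [lp p0 sp]]; exists p; split => //; last first.
    exact: leq_trans sp kk.
  move: dd => /subnK <-; elim: (d' - d)%N => [|j IH].
    by apply: L_sub lp => a; apply: incl.
  by rewrite addSn; apply: LS.
have [M HM] := stab2 mono.
exists M => m le a.
move: {2}(size a) (leqnn (size a)) => s; elim: s a => [|s IH] a sa na.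
  by move: sa; rewrite leqn0 size_poly_eq0 => /eqP ->; case: (sN M).
have [->|a0] := eqVneq a 0; first by case: (sN M).
set d := (size a).-1.
have sa' : size a = d.+1 by rewrite /d prednK // size_poly_gt0.
set p := a`_d.
have p0 : p != 0 by rewrite /p -/(lead_coef a) lead_coef_eq0.
have lp : L (N m) d p by exists a; split => //; rewrite sa'.
have [g [[lg g0 _] mg]] : exists g, [/\ L (N M) d g, g != 0 & True] /\
    forall g', L (N M) d g' -> g' != 0 -> (size g <= size g')%N.
  have pk : P d M (size p) by apply: HM le _ _ _; exists p; split.
  have [k0 [[g [lg g0 sg]] mk]] := @ex_min (P d M) _ pk.
  exists g; split => // g' lg' g0'.
  apply: leq_trans sg _; apply: mk; by exists g'; split.
have lgm : L (N m) d g by apply: L_sub lg => b; apply: incl.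
have pg : p %% g = 0.
  apply/eqP; apply: contraT => r0.
  have lr : L (N m) d (p %% g).
    have -> : p %% g = p + g * (- (p %/ g)).
      by rewrite {2}(divp_eq p g) mulrN [g * _]mulrC addrAC subrr add0r.
    by apply: (LD (sN m)) => //; apply: (LM (sN m)).
  have [g' [lg' g0' sg']] := HM m le d _ (ex_intro _ (p %% g) (And3 lr r0 (leqnn _))).
  have := mg g' lg' g0'; have := ltn_modp p g; rewrite g0 => lt.
  by rewrite leqNgt (leq_trans _ lt) // ltnS.
have lpM : L (N M) d p.
  by rewrite (divp_eq p g) pg addr0 mulrC; apply: (LM (sN M)).
case: lpM => b [nb sb cb].
have -> : a = (a - b) + b by rewrite subrK.
case: (sN M) => _ hD _; apply: hD => //; apply: IH.
  apply: (@leq_trans d); last by rewrite -ltnS -sa'.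
  apply/leq_sizeP => j hj; rewrite coefB.
  have [<-|hj'] := eqVneq d j; first by rewrite cb subrr.
  have hj2 : (d < j)%N by rewrite ltn_neqAle hj' hj.
  rewrite !nth_default ?subrr //; first by rewrite (leq_trans sb).
  by rewrite sa'.
case: (sN m) => _ hDm _; apply: hDm => //.
by apply: N_opp (sN m) _ (incl _ _ le _ nb).
Qed.
End Noeth.


Section Final.
Variable F : fieldType.

Lemma gacc_right : forall N : nat -> weyl F -> Prop,
  (forall n, gsub (@wmul F) (N n)) -> (forall n a, N n a -> N n.+1 a) ->
  exists n, forall m, (n <= m)%N -> forall a, N m a -> N n a.
Proof.
apply: gacc.
- move=> a q d sa; rewrite wmulE.
  have [s c] := act_top sa (size_polyC_leq1 q); rewrite addn0 in s c.
  by rewrite c coefC eqxx.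
- move=> a d sa; rewrite wmulE.
  have sX : (size (wy F) <= 1.+1)%N by rewrite /wy size_polyX.
  have [s c] := act_top sa sX; rewrite addn1 in s c.
  by rewrite c /wy coefX mulr1.
- by move=> a; rewrite wmul_scalr polyCN polyC1 polyCN polyC1 mulN1r.
Qed.

Lemma gacc_left : forall N : nat -> weyl F -> Prop,
  (forall n, gsub (fun a r => @wmul F r a) (N n)) -> (forall n a, N n a -> N n.+1 a) ->
  exists n, forall m, (n <= m)%N -> forall a, N m a -> N n a.
Proof.
apply: gacc.
- move=> a q d sa; rewrite wmulCl; split; last by rewrite coefCM mulrC.
  by rewrite mul_polyC (leq_trans (size_scale_leq _ _)).
- move=> a d sa; rewrite wmulE.
  have sX : (size (wy F) <= 1.+1)%N by rewrite /wy size_polyX.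
  have [s c] := act_top sX sa; rewrite add1n in s c.
  by rewrite c /wy coefX mul1r.
- by move=> a; rewrite wmulCl polyCN polyC1 polyCN polyC1 mulN1r.
Qed.

Lemma const_noeth_right (h : {poly F}) : nonzero_const h -> noetherian_right h.
Proof.
move=> hc N sN inc; apply: gacc_right inc => n.
by case: (sN n) => a b c; split => // x r nx; apply: c => //; apply: const_Ah.
Qed.

Lemma const_noeth_left (h : {poly F}) : nonzero_const h -> noetherian_left h.
Proof.
move=> hc N sN inc; apply: gacc_left inc => n.
by case: (sN n) => a b c; split => // x r nx; apply: c => //; apply: const_Ah.
Qed.

Lemma unit_indep n (idx : 'I_n -> unit) (b : 'I_n -> weyl F) :
  injective idx -> \sum_(i < n) b i = 0 -> forall i, b i = 0.
Proof.
move=> inj s0 i; apply: (etrans _ s0); rewrite (bigD1 i) //= big1 ?addr0 // => j nj.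
by exfalso; move/eqP: nj; apply; apply: inj; case: (idx j); case: (idx i).
Qed.

Lemma const_free_right (h : {poly F}) : nonzero_const h -> free_right h.
Proof.
move=> hc; exists unit, (fun _ => 1); split.
  move=> a; exists 1%N, (fun _ => tt), (fun _ => a); split; first by move=> _; apply: const_Ah.
  by rewrite big_ord1 wmul1l.
move=> n idx b inj _ s0; apply: (unit_indep inj).
apply: (etrans _ s0); apply: eq_bigr => i _; by rewrite wmul1l.
Qed.

Lemma const_free_left (h : {poly F}) : nonzero_const h -> free_left h.
Proof.
move=> hc; exists unit, (fun _ => 1); split.
  move=> a; exists 1%N, (fun _ => tt), (fun _ => a); split; first by move=> _; apply: const_Ah.
  by rewrite big_ord1 wmul1r.
move=> n idx b inj _ s0; apply: (unit_indep inj).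
apply: (etrans _ s0); apply: eq_bigr => i _; by rewrite wmul1r.
Qed.
End Final.

Unset Implicit Arguments.

Theorem corollary4p5 (F : fieldType) (h : {poly F}) (hnz : h != 0) :
  [/\ (nonzero_const h <-> noetherian_right h),
      (nonzero_const h <-> free_right h),
      (nonzero_const h <-> noetherian_left h)
    & (nonzero_const h <-> free_left h)].
Proof.
split; split.
- exact: const_noeth_right.
- exact: noeth_right_const.
- exact: const_free_right.
- exact: free_right_const.
- exact: const_noeth_left.
- exact: noeth_left_const.
- exact: const_free_left.
- exact: free_left_const.
Qed.
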